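(* Let $n\geq 3$ and let $\tau$ be a maximal simplex of $\mathrm{VR}(\mathbb{Z}^n;2)$. Then one of the following holds: (i) $\tau=N[x]$ for some $x\in\mathbb{Z}^n$; (ii) $\tau=\{x,x^{i_0},x^{j_0},x^{i_0,j_0}\}$ for some $x\in\mathbb{Z}^n$ and $i_0,j_0\in[n]^{\pm}$; (iii) $\tau=\{x,x^{i_0,j_0},x^{j_0,k_0},x^{i_0,k_0}\}$ for some $x\in\mathbb{Z}^n$ and $i_0,j_0,k_0\in[n]^{\pm}$.
   Context: $\mathbb{Z}^n$ carries the Manhattan metric $d(x,y)=\sum_{i=1}^n|x_i-y_i|$; $\mathrm{VR}(X;r)$ is the simplicial complex on $X$ whose simplices are finite subsets of diameter at most $r$. Write $[n]=\{1,\ldots,n\}$, $[-n]=\{-1,\ldots,-n\}$, $[n]^{\pm}=[n]\cup[-n]$. For $x\in\mathbb{Z}^n$ and $i_1,\ldots,i_k\in[n]^{\pm}$ with pairwise distinct absolute values, $x^{i_1,\ldots,i_k}\in\mathbb{Z}^n$ is obtained from $x$ by adding $1$ to the $j$-th coordinate for each $j\in\{i_1,\ldots,i_k\}\cap[n]$ and subtracting $1$ from the $j$-th coordinate for each $j$ with $-j\in\{i_1,\ldots,i_k\}$, other coordinates unchanged. $N[x]=\{y\in\mathbb{Z}^n: d(x,y)\leq 1\}$ is the closed neighbourhood of $x$ in the grid graph. *)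

(* Defs.v *)
From HB Require Import structures.
From mathcomp Require Import all_boot all_order all_algebra.
From mathcomp Require Import finmap.
Set Implicit Arguments. Unset Strict Implicit. Unset Printing Implicit Defensive.
Import Order.TTheory GRing.Theory Num.Theory.
Local Open Scope fset_scope.

Definition pt (n : nat) := {ffun 'I_n -> int}.

Definition mdist (n : nat) (x y : pt n) : nat :=
  (\sum_(i < n) `|(x i - y i)%R|%N)%N.

Definition vr2_simplex (n : nat) (t : {fset pt n}) : Prop :=
  t != fset0 /\ (forall x y, x \in t -> y \in t -> mdist x y <= 2).

Definition vr2_maximal (n : nat) (t : {fset pt n}) : Prop :=
  vr2_simplex t /\
  (forall s : {fset pt n}, vr2_simplex s -> t `<=` s -> s = t).

(* Signed index in [n]^{+-}: (j, true) is +j, (j, false) is -j. *)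
Definition sidx (n : nat) := ('I_n * bool)%type.

Definition shift1 (n : nat) (x : pt n) (i : sidx n) : pt n :=
  [ffun j => if j == i.1 then (x j + (if i.2 then 1 else -1))%R else x j].

(* x^{i_1,...,i_k}; only meaningful when the absolute values are distinct. *)
Definition shiftl (n : nat) (x : pt n) (s : seq (sidx n)) : pt n :=
  foldr (fun i y => shift1 y i) x s.

Definition distinct_abs (n : nat) (s : seq (sidx n)) : bool :=
  uniq (map fst s).

(* Main.v *)
Require Import Defs.
From HB Require Import structures.
From mathcomp Require Import all_boot all_order all_algebra.
From mathcomp Require Import finmap zify.
From Stdlib Require Import Classical.
Set Implicit Arguments. Unset Strict Implicit. Unset Printing Implicit Defensive.
Import Order.TTheory GRing.Theory Num.Theory.
Local Open Scope fset_scope.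

Definition sg (b : bool) : int := if b then 1%R else (-1)%R.
Definition ev n (i : sidx n) (l : 'I_n) : int := if l == i.1 then sg i.2 else 0%R.

Ltac evsimp := rewrite /ev /= ?eqxx; repeat match goal with
 | H : is_true (?x != ?y) |- context [?x == ?y] => rewrite (negbTE H)
 | H : is_true (?x != ?y) |- context [?y == ?x] => rewrite [y == x]eq_sym (negbTE H)
 end.

Ltac crunch := rewrite /ev /=; repeat (rewrite ?eqxx /=; match goal with |- context [?x == ?y] => case: (eqVneq x y) => [?|?]; try subst end).

Section S.
Variable n : nat.
Implicit Types x y z w a c : pt n.
Implicit Types i j k : sidx n.

Lemma shift1E x i l : shift1 x i l = (x l + ev i l)%R.
Proof. rewrite /shift1 ffunE /ev; case: (l == i.1) => //; by rewrite addr0. Qed.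

Lemma S_comm x i j : shift1 (shift1 x i) j = shift1 (shift1 x j) i.
Proof. apply/ffunP => l; rewrite !shift1E; lia. Qed.

Lemma mdist_split x y l : mdist x y =
  (absz (x l - y l)%R + \sum_(k | k != l) absz (x k - y k)%R)%N.
Proof. by rewrite /mdist (bigD1 l). Qed.

Lemma mdist_ge2 x y p q : p != q ->
  (absz (x p - y p)%R + absz (x q - y q)%R <= mdist x y)%N.
Proof.
move=> pq; rewrite (mdist_split x y p) leq_add2l (bigD1 q); last by rewrite eq_sym.
exact: leq_addr.
Qed.

Lemma mdist_ge3 x y p q r : p != q -> p != r -> q != r ->
  (absz (x p - y p)%R + absz (x q - y q)%R + absz (x r - y r)%R <= mdist x y)%N.
Proof.
move=> pq pr qr; rewrite (mdist_split x y p) -addnA leq_add2l (bigD1 q) /=; last by rewrite eq_sym.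
rewrite leq_add2l (bigD1 r) /=; last by rewrite eq_sym pr eq_sym qr.
exact: leq_addr.
Qed.

Lemma mdist_sym x y : mdist x y = mdist y x.
Proof. apply: eq_bigr => l _; lia. Qed.

Lemma mdist_tri x y z : (mdist x z <= mdist x y + mdist y z)%N.
Proof.
rewrite /mdist -big_split /=; apply: leq_sum => l _; lia.
Qed.

Lemma mdist_xx x : mdist x x = 0%N.
Proof. by apply/eqP; rewrite sum_nat_eq0; apply/forallP => l; rewrite subrr. Qed.

Lemma mdist_S x i : mdist x (shift1 x i) = 1%N.
Proof.
rewrite (mdist_split _ _ i.1) shift1E /ev eqxx big1 /=.
  by case: i.2 => /=; lia.
by move=> k /negbTE kn; rewrite shift1E /ev kn; lia.
Qed.

Lemma mdist_S' x i : mdist (shift1 x i) x = 1%N.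
Proof. by rewrite mdist_sym mdist_S. Qed.

Lemma rest0 x y p : \sum_(l | l != p) absz (x l - y l)%R = 0%N ->
  forall l, l != p -> x l = y l.
Proof.
move/eqP; rewrite sum_nat_eq0 => /forallP H l lp.
by have := H l; rewrite lp /=; lia.
Qed.

Lemma exists_diff x y : x <> y -> exists p, x p <> y p.
Proof.
move=> xy; case: (pickP (fun p => x p != y p)) => [p /eqP|H]; first by exists p.
by case: xy; apply/ffunP => p; have := H p => /= /negbFE/eqP.
Qed.


Lemma restP x y (P : pred 'I_n) : \sum_(l | P l) absz (x l - y l)%R = 0%N ->
  forall l, P l -> x l = y l.
Proof.
move/eqP; rewrite sum_nat_eq0 => /forallP H l lp.
by have := H l; rewrite lp /=; lia.
Qed.

Lemma mdist_split2 x y p q : p != q -> mdist x y =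
  (absz (x p - y p)%R + absz (x q - y q)%R +
   \sum_(l | (l != p) && (l != q)) absz (x l - y l)%R)%N.
Proof.
move=> pq; rewrite (mdist_split x y p) -addnA; congr (_ + _)%N.
rewrite (bigD1 q) /=; last by rewrite eq_sym.
by congr (_ + _)%N; apply: eq_bigl => l; rewrite andbC.
Qed.

Lemma sgE d : absz d = 1%N -> sg (0 < d)%R = d.
Proof. by rewrite /sg; case: ifP; lia. Qed.

Lemma shift_of1 x y p : (forall l, l != p -> x l = y l) -> absz (y p - x p)%R = 1%N ->
  y = shift1 x (p, (0 < y p - x p)%R).
Proof.
move=> H d1; apply/ffunP => l; rewrite shift1E /ev /=.
case: (eqVneq l p) => [->|lp]; first by rewrite sgE //; lia.
by rewrite H //; lia.
Qed.

Lemma shift_of2 x y p : (forall l, l != p -> x l = y l) -> absz (y p - x p)%R = 2%N ->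
  y = shift1 (shift1 x (p, (0 < y p - x p)%R)) (p, (0 < y p - x p)%R).
Proof.
move=> H d1; apply/ffunP => l; rewrite !shift1E /ev /=.
case: (eqVneq l p) => [->|lp]; first by rewrite /sg; case: ifP; lia.
by rewrite H //; lia.
Qed.

Lemma shift_of11 x y p q : p != q ->
  (forall l, (l != p) && (l != q) -> x l = y l) ->
  absz (y p - x p)%R = 1%N -> absz (y q - x q)%R = 1%N ->
  y = shift1 (shift1 x (q, (0 < y q - x q)%R)) (p, (0 < y p - x p)%R).
Proof.
move=> pq H d1 d2; apply/ffunP => l; rewrite !shift1E /ev /=.
case: (eqVneq l p) => [->|lp]; first by rewrite (negbTE pq) sgE //; lia.
case: (eqVneq l q) => [->|lq]; first by rewrite sgE //; lia.
by rewrite H ?lp ?lq //; lia.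
Qed.

Lemma dist1_cases c y : (mdist c y <= 1)%N -> y = c \/ exists i, y = shift1 c i.
Proof.
case: (eqVneq y c) => [->|yc]; first by left.
move=> H; right; have [p hp] := exists_diff (nesym (elimN eqP yc)).
move: H; rewrite (mdist_split c y p) => H.
have R0 : \sum_(l | l != p) absz (c l - y l)%R = 0%N.
  move: H; set R := (\sum_(l | l != p) _); move: R => R; lia.
rewrite R0 addn0 in H.
eexists; apply: (@shift_of1 c y p); last by lia.
exact: restP R0.
Qed.

Lemma dist2_cases a y : (mdist a y <= 2)%N ->
  [\/ y = a, (exists i, y = shift1 a i), (exists i, y = shift1 (shift1 a i) i) |
       exists i j, i.1 != j.1 /\ y = shift1 (shift1 a j) i].
Proof.
case: (eqVneq y a) => [->|ya]; first by constructor 1.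
move=> H; have [p hp] := exists_diff (nesym (elimN eqP ya)).
move: (H); rewrite (mdist_split a y p) => H1.
case: (eqVneq (\sum_(l | l != p) absz (a l - y l)%R) 0%N) => [R0|].
  have E := restP R0.
  rewrite R0 addn0 in H1.
  have : (absz (y p - a p)%R = 1 \/ absz (y p - a p)%R = 2)%N.
    move: hp H1. lia.
  case=> D.
    by constructor 2; eexists; apply: (@shift_of1 a y p).
  by constructor 3; eexists; apply: (@shift_of2 a y p).
rewrite sum_nat_eq0 => /forallPn [q] /=; rewrite negb_imply => /andP [qp dq].
have {}qp : p != q by rewrite eq_sym.
move: H; rewrite (mdist_split2 a y qp) => H2.
have R0 : \sum_(l | (l != p) && (l != q)) absz (a l - y l)%R = 0%N.
  move: H2; set R := (\sum_(l | _ && _) _); move: R => R; lia.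
rewrite R0 addn0 in H2.
constructor 4; do 2 eexists; split; last first.
  apply: (@shift_of11 a y p q qp (restP R0)); lia.
by [].
Qed.


Lemma rest_shift y i w : \sum_(l | l != i.1) absz (shift1 y i l - w l)%R =
  \sum_(l | l != i.1) absz (y l - w l)%R.
Proof. by apply: eq_bigr => l /negbTE lp; rewrite shift1E /ev lp addr0. Qed.

Lemma F2 y i w : (mdist y w <= 2)%N -> (mdist (shift1 (shift1 y i) i) w <= 2)%N ->
  (mdist (shift1 y i) w <= 1)%N.
Proof.
rewrite !(mdist_split _ _ i.1) !rest_shift !shift1E /ev eqxx.
set R := (\sum_(l | _) _); move: R => R.
by case: i.2 => /=; lia.
Qed.


Lemma F3 a i j k : i.1 != j.1 -> k <> i -> k <> j ->
  (3 <= mdist (shift1 a k) (shift1 (shift1 a j) i))%N.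
Proof.
case: i => i1 si; case: j => j1 sj; case: k => k1 sk /= ij ki kj.
case: (eqVneq k1 i1) => [E|ki1].
  subst k1.
  move: (mdist_ge2 (shift1 a (i1,sk)) (shift1 (shift1 a (j1,sj)) (i1,si)) ij).
  rewrite !shift1E; evsimp.
  destruct si, sk, sj => /=; (congruence || lia).
case: (eqVneq k1 j1) => [E|kj1].
  subst k1.
  move: (mdist_ge2 (shift1 a (j1,sk)) (shift1 (shift1 a (j1,sj)) (i1,si)) ij).
  rewrite !shift1E; evsimp.
  destruct si, sk, sj => /=; (congruence || lia).
have ik1 : i1 != k1 by rewrite eq_sym.
have jk1 : j1 != k1 by rewrite eq_sym.
move: (mdist_ge3 (shift1 a (k1,sk)) (shift1 (shift1 a (j1,sj)) (i1,si)) ij ik1 jk1).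
rewrite !shift1E; evsimp.
destruct si, sk, sj => /=; (congruence || lia).
Qed.


Lemma F4 a i j k l : i.1 != j.1 -> k.1 != l.1 -> k <> i -> k <> j -> l <> i -> l <> j ->
  (3 <= mdist (shift1 (shift1 a j) i) (shift1 (shift1 a l) k))%N.
Proof.
case: i => i1 si; case: j => j1 sj; case: k => k1 sk; case: l => l1 sl /= ij kl ki kj li lj.
case: (boolP [|| k1 == i1, k1 == j1, l1 == i1 | l1 == j1]) => Hc.
  move: Hc kl ij (mdist_ge2 (shift1 (shift1 a (j1,sj)) (i1,si)) (shift1 (shift1 a (l1,sl)) (k1,sk)) ij).
  rewrite !shift1E; crunch; destruct si, sk, sj, sl => /=; (congruence || lia).
have ik1 : i1 != k1 by apply: contra Hc; rewrite eq_sym => ->.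
have jk1 : j1 != k1 by apply: contra Hc; rewrite eq_sym => ->; rewrite orbT.
move: Hc kl ij ik1 jk1 (mdist_ge3 (shift1 (shift1 a (j1,sj)) (i1,si)) (shift1 (shift1 a (l1,sl)) (k1,sk)) ij ik1 jk1).
rewrite !shift1E; crunch; destruct si, sk, sj, sl => /=; (congruence || lia).
Qed.


Lemma le2_via y m z : (mdist y m <= 1)%N -> (mdist m z <= 1)%N -> (mdist y z <= 2)%N.
Proof. move=> h1 h2; apply: leq_trans (mdist_tri y m z) _; lia. Qed.

Definition Nfs c : {fset pt n} := c |` [fset shift1 c i | i : sidx n].

Lemma in_Nfs c y : (y \in Nfs c) = (mdist c y <= 1)%N.
Proof.
apply/idP/idP.
  rewrite !inE => /orP [/eqP ->|/imfsetP [i _ ->]]; first by rewrite mdist_xx.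
  by rewrite mdist_S.
case/dist1_cases => [->|[i ->]]; rewrite !inE ?eqxx //.
apply/orP; right; apply/imfsetP; by exists i.
Qed.

Lemma Nfs_simplex c : vr2_simplex (Nfs c).
Proof.
split.
  apply/fset0Pn; exists c; by rewrite in_Nfs mdist_xx.
move=> y z; rewrite !in_Nfs => hy hz; apply: (le2_via (m := c)) => //.
by rewrite mdist_sym.
Qed.

Definition Sq x i j : {fset pt n} :=
  [fset x; shiftl x [:: i]; shiftl x [:: j]; shiftl x [:: i; j]].
Definition Tet x i j k : {fset pt n} :=
  [fset x; shiftl x [:: i; j]; shiftl x [:: j; k]; shiftl x [:: i; k]].

End S.

Ltac d1 := first [ by rewrite mdist_xx | by rewrite mdist_S | by rewrite mdist_S'
  | by rewrite S_comm mdist_S | by rewrite S_comm mdist_S' ].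

Ltac d2 m := apply: (le2_via (m := m)); d1.

Section S2.
Variable n : nat.
Implicit Types x y z w a c : pt n.
Implicit Types i j k : sidx n.

Lemma Sq_simplex x i j : vr2_simplex (Sq x i j).
Proof.
split; first by apply/fset0Pn; exists x; rewrite !inE eqxx.
move=> y z; rewrite /Sq /shiftl /= !inE -!orbA.

move=> /or4P [] /eqP -> /or4P [] /eqP ->;
  first [ d2 x | d2 (shift1 x i) | d2 (shift1 x j) ].
Qed.

Lemma Tet_simplex x i j k : vr2_simplex (Tet x i j k).
Proof.
split; first by apply/fset0Pn; exists x; rewrite !inE eqxx.
move=> y z; rewrite /Tet /shiftl /= !inE -!orbA.

move=> /or4P [] /eqP -> /or4P [] /eqP ->;
  first [ d2 x | d2 (shift1 x i) | d2 (shift1 x j) | d2 (shift1 x k) ].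
Qed.

End S2.

Definition coverP n (t : {fset pt n}) :=
  (exists c, forall w, w \in t -> (mdist c w <= 1)%N) \/
  (exists x i j, distinct_abs [:: i; j] /\ forall w, w \in t -> w \in Sq x i j) \/
  (exists x i j k, distinct_abs [:: i; j; k] /\ forall w, w \in t -> w \in Tet x i j k).

Section S3.
Variable n : nat.
Implicit Types x y z w a c : pt n.
Implicit Types i j k l p q m : sidx n.
Variable t : {fset pt n}.
Hypothesis Hd : forall y z, y \in t -> z \in t -> (mdist y z <= 2)%N.
Hypothesis nodbl : forall y i, y \in t -> shift1 (shift1 y i) i \in t -> False.
Variable a : pt n.
Hypothesis at_ : a \in t.

Lemma cls w : w \in t ->
  [\/ w = a, (exists k, w = shift1 a k) | exists k l, k.1 != l.1 /\ w = shift1 (shift1 a l) k].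
Proof.
move=> wt; case/dist2_cases: (Hd at_ wt) => [->|[k ->]|[k E]|[k [l [kl ->]]]].
- by constructor 1.
- by constructor 2; exists k.
- by exfalso; apply: (nodbl (i:=k) at_); rewrite -E.
- by constructor 3; exists k, l.
Qed.

Lemma F3' i j k : shift1 a k \in t -> shift1 (shift1 a j) i \in t -> i.1 != j.1 ->
  k = i \/ k = j.
Proof.
move=> h1 h2 ij; case: (eqVneq k i) => [->|ki]; first by left.
case: (eqVneq k j) => [->|kj]; first by right.
have := F3 a ij (elimN eqP ki) (elimN eqP kj); have := Hd h1 h2; lia.
Qed.

Lemma F4' i j k l : shift1 (shift1 a j) i \in t -> shift1 (shift1 a l) k \in t ->
  i.1 != j.1 -> k.1 != l.1 -> [\/ k = i, k = j, l = i | l = j].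
Proof.
move=> h1 h2 ij kl.
case: (eqVneq k i) => [->|ki]; first by constructor 1.
case: (eqVneq k j) => [->|kj]; first by constructor 2.
case: (eqVneq l i) => [->|li]; first by constructor 3.
case: (eqVneq l j) => [->|lj]; first by constructor 4.
have := F4 a ij kl (elimN eqP ki) (elimN eqP kj) (elimN eqP li) (elimN eqP lj).
have := Hd h1 h2; lia.
Qed.

End S3.

Section S4.
Variable n : nat.
Implicit Types x y z w a c : pt n.
Implicit Types i j k l p q m : sidx n.
Variable t : {fset pt n}.
Hypothesis Hd : forall y z, y \in t -> z \in t -> (mdist y z <= 2)%N.
Hypothesis nodbl : forall y i, y \in t -> shift1 (shift1 y i) i \in t -> False.
Variable a : pt n.
Hypothesis at_ : a \in t.

Lemma tri p q m : p.1 != q.1 -> p.1 != m.1 -> m <> q ->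
  shift1 (shift1 a q) p \in t -> shift1 (shift1 a m) p \in t -> coverP t.
Proof.
move=> pq pm mq A B.
have pqP : p <> q by move=> E; move: pq; rewrite E eqxx.
have pmP : p <> m by move=> E; move: pm; rewrite E eqxx.
case: (classic (q.1 != m.1 /\ shift1 (shift1 a m) q \in t)) => [[qm C]|NC].
- right; right; exists a, p, q, m; split.
    by rewrite /distinct_abs /= !inE negb_or pq pm qm.
  move=> w wt; rewrite /Tet /shiftl /= !inE -!orbA.
  case: (cls Hd nodbl at_ wt) => [E|[k E]|[k [l [kl E]]]]; subst w.
  + by rewrite eqxx.
  + exfalso.
    case: (F3' Hd at_ wt A pq) => E1; case: (F3' Hd at_ wt B pm) => E2;
    case: (F3' Hd at_ wt C qm) => E3; congruence.
  + have klP : k.1 <> l.1 by move=> E; move: kl; rewrite E eqxx.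
    case: (F4' Hd at_ A wt pq kl) => E1; case: (F4' Hd at_ B wt pm kl) => E2;
    case: (F4' Hd at_ C wt qm kl) => E3; subst;
    first [congruence | by rewrite eqxx !orbT | by rewrite S_comm eqxx !orbT].
- left; exists (shift1 a p) => w wt.
  case: (cls Hd nodbl at_ wt) => [E|[k E]|[k [l [kl E]]]]; subst w.
  + by rewrite mdist_S'.
  + case: (F3' Hd at_ wt A pq) => E1; case: (F3' Hd at_ wt B pm) => E2;
    subst; first [by rewrite mdist_xx | congruence].
  + have klP : k.1 <> l.1 by move=> E; move: kl; rewrite E eqxx.
    case: (F4' Hd at_ A wt pq kl) => E1; case: (F4' Hd at_ B wt pm kl) => E2;
    subst; first [ d1 | congruence
      | (exfalso; apply: NC; split; [by rewrite eq_sym | by rewrite S_comm])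
      | (exfalso; apply: NC; split => //)].
Qed.

End S4.

Lemma cover n (t : {fset pt n}) : vr2_simplex t -> coverP t.
Proof.
case=> /fset0Pn [a at_] Hd.
case: (classic (exists y i, y \in t /\ shift1 (shift1 y i) i \in t)) => [[y [i [yt zt]]]|ND].
  left; exists (shift1 y i) => w wt; apply: F2; [exact: Hd | exact: Hd].
have nodbl : forall y i, y \in t -> shift1 (shift1 y i) i \in t -> False.
  by move=> y i h1 h2; apply: ND; exists y, i.
case: (classic (exists i j, i.1 != j.1 /\ shift1 (shift1 a j) i \in t)); last first.
  move=> N2; left; exists a => w wt.
  case: (cls Hd nodbl at_ wt) => [E|[k E]|[k [l [kl E]]]]; subst w.
  - by rewrite mdist_xx.
  - by rewrite mdist_S.
  - by exfalso; apply: N2; exists k, l.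
move=> [i [j [ij w0]]].
case: (classic (forall w, w \in t -> w \in Sq a i j)) => [HS|NS].
  right; left; exists a, i, j; split => //.
  by rewrite /distinct_abs /= inE andbT.
case: (classic (exists w1, w1 \in t /\ w1 \notin Sq a i j)); last first.
  move=> H; exfalso; apply: NS => w wt; apply/negPn/negP => hn; apply: H.
  by exists w.
move=> [w1 [w1t nin]].
have ijP : i <> j by move=> E; move: ij; rewrite E eqxx.
case: (cls Hd nodbl at_ w1t) => [E|[k E]|[k [l [kl E]]]]; subst w1.
- by rewrite /Sq !inE eqxx in nin.
- case: (F3' Hd at_ w1t w0 ij) => E; subst k;
  by rewrite /Sq /shiftl /= !inE eqxx !orbT in nin.
- have klP : k.1 <> l.1 by move=> E; move: kl; rewrite E eqxx.
  have w0' : shift1 (shift1 a i) j \in t by rewrite S_comm.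
  have ji : j.1 != i.1 by rewrite eq_sym.
  case: (F4' Hd at_ w0 w1t ij kl) => E; subst.
  + apply: (tri Hd nodbl at_ (p := i) (q := j) (m := l)) => //.
    by move=> E; subst l; rewrite /Sq /shiftl /= !inE eqxx !orbT in nin.
  + apply: (tri Hd nodbl at_ (p := j) (q := i) (m := l)) => //.
    by move=> E; subst l; rewrite /Sq /shiftl /= !inE S_comm eqxx !orbT in nin.
  + rewrite S_comm in w1t nin.
    apply: (tri Hd nodbl at_ (p := i) (q := j) (m := k)) => //.
      by rewrite eq_sym.
    by move=> E; subst k; rewrite /Sq /shiftl /= !inE eqxx !orbT in nin.
  + rewrite S_comm in w1t nin.
    apply: (tri Hd nodbl at_ (p := j) (q := i) (m := k)) => //.
      by rewrite eq_sym.
    by move=> E; subst k; rewrite /Sq /shiftl /= !inE S_comm eqxx !orbT in nin.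
Qed.

Theorem lemma4p1 (n : nat) (hn : 3 <= n) (t : {fset pt n}) :
  vr2_maximal t ->
  (exists x : pt n, forall y : pt n, (y \in t) = (mdist x y <= 1))
  \/ (exists (x : pt n) (i0 j0 : sidx n),
        distinct_abs [:: i0; j0] /\
        t = [fset x; shiftl x [:: i0]; shiftl x [:: j0]; shiftl x [:: i0; j0]])
  \/ (exists (x : pt n) (i0 j0 k0 : sidx n),
        distinct_abs [:: i0; j0; k0] /\
        t = [fset x; shiftl x [:: i0; j0]; shiftl x [:: j0; k0];
                     shiftl x [:: i0; k0]]).
Proof.
case=> Hs Hmax.
case: (cover Hs) => [[c Hc]|[[x [i [j [dij Hsub]]]]|[x [i [j [k [dijk Hsub]]]]]]].
- left; exists c => y.
  have E : Nfs c = t.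
    apply: Hmax; first exact: Nfs_simplex.
    by apply/fsubsetP => w wt; rewrite in_Nfs; apply: Hc.
  by rewrite -E in_Nfs.
- right; left; exists x, i, j; split => //.
  symmetry; apply: Hmax; first exact: Sq_simplex.
  by apply/fsubsetP => w wt; apply: Hsub.
- right; right; exists x, i, j, k; split => //.
  symmetry; apply: Hmax; first exact: Tet_simplex.
  by apply/fsubsetP => w wt; apply: Hsub.
Qed.
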